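(* Let $m\ge1$ and suppose $u=u_1\ldots u_n\in[m]^*$ is weakly increasing ($u_1\le\cdots\le u_n$). Then $$S(u;x_1,\ldots,x_m)=\frac{\prod_{i=1}^n\sum_{j=u_i}^m x_j}{\left(1+\sum_{i=1}^{n-1}\prod_{j=i+1}^n\sum_{l=u_j}^m x_l\right)\left(1-\sum_{i=1}^m x_i\right)+\prod_{i=1}^n\sum_{j=u_i}^m x_j}.$$
   Context: $[m]^*$ is the set of finite words over $[m]=\{1,\ldots,m\}$ with the usual order. An embedding of $u$ into $w$ is a string of $|u|$ consecutive letters of $w$ whose $i$-th letter is $\ge$ the $i$-th letter of $u$ for every $i$. $\mathcal{S}(u)$ is the set of words $w$ admitting an embedding of $u$ such that the last $|u|$ letters of $w$ form the only embedding of $u$ into $w$. For $w\in[m]^*$, $c_i(w)$ is the number of occurrences of $i$ in $w$ and $W_{[m]}(w)=\prod_{i=1}^m x_i^{c_i(w)}$. $S(u;x_1,\ldots,x_m)=\sum_{w\in\mathcal{S}(u)\cap[m]^*}W_{[m]}(w)$. *)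

(* Defs.v *)
From HB Require Import structures.
From mathcomp Require Import all_boot all_order all_algebra.
Set Implicit Arguments. Unset Strict Implicit. Unset Printing Implicit Defensive.
Import Order.TTheory GRing.Theory Num.Theory.
Local Open Scope ring_scope.

(* A monomial x_1^{e 0} ... x_m^{e (m-1)} : exponent of x_{i+1} is e i. *)
Definition monom (m : nat) := {ffun 'I_m -> nat}.
Definition series (m : nat) := monom m -> int.

Definition sadd m (a b : series m) : series m := fun e => a e + b e.
Definition sneg m (a : series m) : series m := fun e => - a e.
Definition ssub m (a b : series m) : series m := sadd a (sneg b).
Definition szero m : series m := fun _ => 0.
Definition sone m : series m := fun e => if e == [ffun _ => 0%N] then 1 else 0.
(* Cauchy product: coefficient of e is the sum over f <= e of a_f * b_(e-f). *)
Definition smul m (a b : series m) : series m := fun e =>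
  \sum_(g : {ffun 'I_m -> 'I_((\sum_i e i)%N).+1} | [forall i, (g i <= e i)%N])
     a [ffun i => val (g i)] * b [ffun i => (e i - g i)%N].
Definition X m (j : nat) : series m :=
  fun e => if e == [ffun i : 'I_m => ((i.+1 == j) : nat)] then 1 else 0.

Definition T m (a : nat) : series m := \big[@sadd m/@szero m]_(a <= j < m.+1) @X m j.

(* Words over [m] = {1,...,m} are seq nat with letters in [1,m]. *)
(* An embedding of u into w starting at position i (0-based). *)
Definition embeds_at (u w : seq nat) (i : nat) : bool :=
  ((i + size u <= size w)%N) &&
  all (fun k => (nth 0%N u k <= nth 0%N w (i + k))%N) (iota 0 (size u)).

(* w in S(u): u embeds into w at the last |u| letters, and this is the only embedding. *)
Definition inS (u w : seq nat) : bool :=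
  embeds_at u w (size w - size u)%N &&
  all (fun i => embeds_at u w i ==> (i == size w - size u)%N) (iota 0 (size w).+1).

(* The word in [m]^* given by a tuple of 'I_m (letter a |-> a+1). *)
Definition word_of m (t : seq 'I_m) : seq nat := map (fun a : 'I_m => (val a).+1) t.

Definition content m (w : seq nat) : monom m := [ffun i : 'I_m => count_mem i.+1 w].

(* S(u; x_1..x_m): coefficient of x^e is the number of words w in S(u) cap [m]^*
   with c_i(w) = e_i; such words have length sum_i e_i. *)
Definition Sser m (u : seq nat) : series m := fun e =>
  (#|[set t : ((\sum_i e i)%N).-tuple 'I_m |
       (content m (word_of t) == e) && inS u (word_of t)]|)%:Z.

(* Main.v *)
Require Import Defs.
From HB Require Import structures.
From mathcomp Require Import all_boot all_order all_algebra.
From Stdlib Require Import FunctionalExtensionality Lia.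
Set Implicit Arguments. Unset Strict Implicit. Unset Printing Implicit Defensive.
Import Order.TTheory GRing.Theory Num.Theory.
Local Open Scope ring_scope.

Ltac tonat := repeat match goal with
  | H : is_true (ssrnat.leq _ _) |- _ => move/ssrnat.leP: H => H
  | H : is_true (~~ ssrnat.leq _ _) |- _ => move/negP/ssrnat.leP: H => H
  | |- is_true (ssrnat.leq _ _) => apply/ssrnat.leP
  | |- is_true (~~ ssrnat.leq _ _) => apply/negP/ssrnat.leP
  end; change addn with Nat.add in *; change subn with Nat.sub in *.
Ltac mlia := tonat; lia.

Definition bi (b : bool) : int := if b then 1 else 0.
Lemma biM a b : bi a * bi b = bi (a && b).
Proof. by case: a; case: b; rewrite /= ?mulr1 ?mulr0 ?mul0r. Qed.

Lemma sum_bi_mem (r : seq nat) x : \sum_(j <- r) bi (x == j) = (count_mem x r)%:Z.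
Proof.
elim: r => [|a r IH]; first by rewrite big_nil.
by rewrite big_cons IH /= eq_sym; case: (a == x); rewrite //= PoszD add1n.
Qed.

Section W.
Variable m : nat.
Definition wfun := seq 'I_m -> int.
Fixpoint words k : seq (seq 'I_m) :=
  if k is k'.+1 then [seq a :: w | a <- enum 'I_m, w <- words k'] else [:: [::]].

Lemma mem_words k w : (w \in words k) = (size w == k).
Proof.
elim: k w => [|k IH] w /=; first by rewrite inE size_eq0.
apply/allpairsP/idP.
  by case=> [[a w']] [_ /=]; rewrite IH => /eqP <- ->.
case: w => [|a w] //= H; exists (a, w); split=> //; first by rewrite mem_enum.
by rewrite IH.
Qed.

Lemma uniq_words k : uniq (words k).
Proof.
elim: k => [|k IH] //=; apply: allpairs_uniq => //; first exact: enum_uniq.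
by case=> [a w] [b v] _ _ /= [-> ->].
Qed.

Lemma words_split k1 k2 (H : seq 'I_m -> seq 'I_m -> int) :
  \sum_(w <- words (k1 + k2)) H (take k1 w) (drop k1 w) =
  \sum_(w1 <- words k1) \sum_(w2 <- words k2) H w1 w2.
Proof.
elim: k1 H => [|k1 IH] H.
  rewrite add0n /= big_cons big_nil addr0; apply: eq_bigr => w _.
  by rewrite take0 drop0.
rewrite addSn /= !big_allpairs_dep /=; apply: eq_bigr => a _.
exact: (IH (fun w1 w2 => H (a :: w1) w2)).
Qed.

Definition cont (w : seq 'I_m) : monom m := content m (word_of w).
Definition msz (c : monom m) := (\sum_i c i)%N.

Lemma cont_cat w1 w2 : cont (w1 ++ w2) = [ffun i => (cont w1 i + cont w2 i)%N].
Proof. by apply/ffunP => i; rewrite !ffunE /word_of map_cat count_cat. Qed.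

Lemma msz_cont w : msz (cont w) = size w.
Proof.
rewrite /msz /cont /content /word_of; under eq_bigr => i _ do rewrite ffunE.
elim: w => [|a w IH] /=; first by apply: big1.
under eq_bigr => i _ do rewrite /= eqSS.
by rewrite big_split /= IH (bigD1 a) //= eqxx big1 // => i Hi; case: eqP => // E; case/eqP: Hi; exact/val_inj.
Qed.


Definition G (f : wfun) : series m :=
  fun c => \sum_(w <- words (msz c) | cont w == c) f w.
Definition conv (f g : wfun) : wfun :=
  fun w => \sum_(k < (size w).+1) f (take k w) * g (drop k w).

Lemma sum_single N k0 (Z : nat -> int) : (k0 < N)%N ->
  (forall k, (k < N)%N -> k != k0 -> Z k = 0) -> \sum_(k < N) Z k = Z k0.
Proof.
move=> lt H; rewrite (bigD1 (Ordinal lt)) //= big1 ?addr0 // => k Hk.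
by apply: H => //; apply: contra Hk => /eqP E; apply/eqP/val_inj.
Qed.

Lemma le_msz (c : monom m) i : (c i <= msz c)%N.
Proof. by rewrite /msz (bigD1 i) //= leq_addr. Qed.

Lemma gg_unique (c : monom m) (w1 w2 : seq 'I_m) :
  \sum_(gg : {ffun 'I_m -> 'I_(msz c).+1} | [forall i, (gg i <= c i)%N])
     bi ((cont w1 == [ffun i => val (gg i)]) &&
         (cont w2 == [ffun i => (c i - gg i)%N])) =
  bi (cont (w1 ++ w2) == c).
Proof.
rewrite cont_cat; case: eqP => [E|NE].
  have Ec i : c i = (cont w1 i + cont w2 i)%N by rewrite -E ffunE.
  have le1 i : (cont w1 i <= c i)%N by rewrite Ec leq_addr.
  have lt1 i : (cont w1 i < (msz c).+1)%N by rewrite ltnS (leq_trans (le1 i)) ?le_msz.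
  pose gg0 : {ffun 'I_m -> 'I_(msz c).+1} := [ffun i => Ordinal (lt1 i)].
  rewrite (bigD1 gg0) /=; last by apply/forallP => i; rewrite ffunE le1.
  rewrite big1 ?addr0.
    have -> : [ffun i => val (gg0 i)] = cont w1 by apply/ffunP => i; rewrite !ffunE.
    rewrite eqxx /=; have -> : [ffun i => (c i - gg0 i)%N] = cont w2.
      by apply/ffunP => i; rewrite !ffunE Ec addKn.
    by rewrite eqxx.
  move=> gg /andP [_ ne]; case: eqP => //= E1; case/eqP: ne; apply/ffunP => i.
  apply/val_inj; move/ffunP: E1 => /(_ i); rewrite !ffunE /= => <-.
  by rewrite /cont ffunE.
apply: big1 => gg /forallP le; case: eqP => //= E1; case: eqP => //= E2.
case: NE; apply/ffunP => i; rewrite ffunE E1 E2 !ffunE subnKC //.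
Qed.

Lemma msz_sub (c : monom m) (gg : {ffun 'I_m -> 'I_(msz c).+1}) :
  [forall i, (gg i <= c i)%N] ->
  msz [ffun i => (c i - gg i)%N] = (msz c - msz [ffun i => val (gg i)])%N.
Proof.
move/forallP=> le; apply/eqP; rewrite -(eqn_add2r (msz [ffun i => val (gg i)])).
rewrite subnK; last by rewrite /msz; apply: leq_sum => i _; rewrite ffunE; exact: le.
apply/eqP; rewrite /msz -big_split /=; apply/eq_bigr => i _; rewrite !ffunE subnK //.
Qed.

Lemma G_conv f g : G (conv f g) = smul (G f) (G g).
Proof.
apply: FunctionalExtensionality.functional_extensionality => c.
rewrite /G /smul.
set S := msz c.
transitivity (\sum_(k < S.+1) \sum_(w1 <- words k) \sum_(w2 <- words (S - k))
                 bi (cont (w1 ++ w2) == c) * (f w1 * g w2)).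
  transitivity (\sum_(w <- words S) \sum_(k < S.+1)
      bi (cont w == c) * (f (take k w) * g (drop k w))).
    rewrite big_mkcond big_seq [RHS]big_seq; apply: eq_bigr => w.
    rewrite mem_words => /eqP sw; rewrite /conv sw.
    case: eqP => _ /=; first by apply: eq_bigr => k _; rewrite mul1r.
    by rewrite big1 // => k _; rewrite mul0r.
  rewrite exchange_big /=; apply: eq_bigr => k _.
  have kS : (k <= S)%N by rewrite -ltnS.
  rewrite -{1}(subnKC kS) -words_split; apply: eq_bigr => w _.
  by rewrite cat_take_drop.
symmetry.
transitivity (\sum_(gg : {ffun 'I_m -> 'I_S.+1} | [forall i, (gg i <= c i)%N])
   \sum_(k < S.+1) \sum_(w1 <- words k) \sum_(w2 <- words (S - k))
     bi ((cont w1 == [ffun i => val (gg i)]) && (cont w2 == [ffun i => (c i - gg i)%N]))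
       * (f w1 * g w2)).
  apply: eq_bigr => gg le.
  have ltS : (msz [ffun i => val (gg i)] < S.+1)%N.
    rewrite ltnS /S /msz; apply: leq_sum => i _; rewrite ffunE.
    by move/forallP: le => /(_ i).
  rewrite (sum_single (k0 := msz [ffun i => val (gg i)])
    (Z := fun k => \sum_(w1 <- words k) \sum_(w2 <- words (S - k))
      bi ((cont w1 == [ffun i => val (gg i)]) && (cont w2 == [ffun i => (c i - gg i)%N]))
       * (f w1 * g w2))) //; last first.
    move=> k _ ne; rewrite big_seq; apply: big1 => w1; rewrite mem_words => /eqP sw1.
    apply: big1 => w2 _; case: eqP => [E|_]; last by rewrite mul0r.
    by case/eqP: ne; rewrite -E msz_cont.
  rewrite msz_sub // big_distrl /=; rewrite !big_mkcond /=; apply: eq_bigr => w1 _.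
  case: eqP => _ /=; last by rewrite big1 // => w2 _; rewrite mul0r.
  rewrite big_distrr big_mkcond /=; apply: eq_bigr => w2 _.
  by case: eqP => _ /=; rewrite ?mul1r ?mul0r ?mulr0.
rewrite exchange_big /=; apply: eq_bigr => k _.
rewrite exchange_big /=; apply: eq_bigr => w1 _.
rewrite exchange_big /=; apply: eq_bigr => w2 _.
by rewrite -big_distrl /= gg_unique.
Qed.


Definition wadd (f g : wfun) : wfun := fun w => f w + g w.
Definition wneg (f : wfun) : wfun := fun w => - f w.
Definition wzero : wfun := fun _ => 0.
Definition wone : wfun := fun w => bi (w == [::]).

Lemma G_add f g : G (wadd f g) = sadd (G f) (G g).
Proof. by apply: functional_extensionality => c; rewrite /G /sadd big_split. Qed.

Lemma G_neg f : G (wneg f) = sneg (G f).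
Proof.
apply: functional_extensionality => c; rewrite /G /sneg /wneg.
by rewrite (big_morph _ (@opprD _) (@oppr0 _)).
Qed.

Lemma G_zero : G wzero = @szero m.
Proof. by apply: functional_extensionality => c; rewrite /G big1. Qed.

Lemma G_ext f g : (forall w, f w = g w) -> G f = G g.
Proof. by move=> H; apply: functional_extensionality => c; apply: eq_bigr. Qed.

Lemma sum_bi_count (r : seq (seq 'I_m)) (Q P : pred (seq 'I_m)) :
  \sum_(w <- r | Q w) bi (P w) = (count (fun w => Q w && P w) r)%:Z.
Proof.
elim: r => [|a r IH]; first by rewrite big_nil.
rewrite big_cons /= IH; case: (Q a); case: (P a) => //=.
Qed.

Lemma G_bi (P : pred (seq 'I_m)) c :
  G (fun w => bi (P w)) c = (count (fun w => (cont w == c) && P w) (words (msz c)))%:Z.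
Proof. exact: sum_bi_count. Qed.

Lemma card_tuples k (P : pred (seq 'I_m)) :
  #|[set t : k.-tuple 'I_m | P t]| = count P (words k).
Proof.
rewrite -sum1dep_card -sum1_count.
have pe : perm_eq (map val (index_enum {: k.-tuple 'I_m})) (words k).
  apply: uniq_perm.
  - by rewrite map_inj_uniq ?index_enum_uniq //; exact: val_inj.
  - exact: uniq_words.
  move=> w; rewrite mem_words; apply/mapP/idP.
    by case=> t _ ->; rewrite size_tuple.
  by move=> H; exists (Tuple H) => //; rewrite mem_index_enum.
by rewrite -(perm_big _ pe) big_map.
Qed.

Lemma G_one : G wone = @sone m.
Proof.
apply: functional_extensionality => c; rewrite /wone G_bi /sone.
case: eqP => [->|ne].
  have -> : msz [ffun _ => 0%N] = 0%N by rewrite /msz big1 // => i _; rewrite ffunE.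
  rewrite /= andbT.
  suff -> : cont [::] == [ffun _ => 0%N] by [].
  by apply/eqP/ffunP => i; rewrite !ffunE.
rewrite (@eq_count _ _ pred0) ?count_pred0 // => w /=.
case: eqP => // E; case: eqP => // E'; case: ne; rewrite -E E'.
by apply/ffunP => i; rewrite !ffunE.
Qed.

Lemma G_X j : (1 <= j <= m)%N -> @X m j = G (fun w => bi (word_of w == [:: j])).
Proof.
case/andP=> j1 jm; apply: functional_extensionality => c; rewrite G_bi /X.
have jlt : (j.-1 < m)%N by rewrite prednK // -ltnS ltnS.
pose w0 := [:: Ordinal jlt].
have ew0 w : (word_of w == [:: j]) = (w == w0).
  case: w => [|a [|b w]] //=; rewrite /w0 ?eqseq_cons ?andbT ?andbF //.
  apply/eqP/eqP => [E|->]; last by rewrite /= prednK.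
  by apply/val_inj => /=; rewrite -E.
have cw0 : cont w0 = [ffun i : 'I_m => ((i.+1 == j) : nat)].
  by apply/ffunP => i; rewrite !ffunE /= addn0 prednK // eq_sym.
have [E|ne] := eqVneq c [ffun i : 'I_m => ((i.+1 == j) : nat)].
  rewrite E (@eq_count _ _ (pred1 w0)); last first.
    by move=> w /=; rewrite ew0; have [->|_] := eqVneq w w0; rewrite ?andbF // cw0 eqxx.
  by rewrite count_uniq_mem ?uniq_words // mem_words -cw0 msz_cont.
rewrite (@eq_count _ _ pred0) ?count_pred0 // => w /=.
rewrite ew0; have [->|_] := eqVneq w w0; rewrite ?andbF //.
by case: eqP => // E; case/eqP: ne; rewrite -E cw0.
Qed.


Lemma conv_oner f w : conv f wone w = f w.
Proof.
rewrite /conv /wone big_ord_recr /= take_size drop_size eqxx mulr1 big1 ?add0r // => k _.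
case: eqP => [E|]; last by rewrite mulr0.
by move: (ltn_ord k); rewrite -subn_gt0 -size_drop E.
Qed.

Lemma conv_onel f w : conv wone f w = f w.
Proof.
rewrite /conv /wone big_ord_recl /= take0 drop0 mul1r big1 ?addr0 // => k _.
case: eqP => [E|]; last by rewrite mul0r.
move: (ltn_ord k) (congr1 size E); rewrite /bump /= add1n size_takel //.
Qed.

Lemma convDr f g h w : conv f (wadd g h) w = wadd (conv f g) (conv f h) w.
Proof. by rewrite /conv /wadd -big_split; apply: eq_bigr => k _; rewrite mulrDr. Qed.

Lemma convDl f g h w : conv (wadd f g) h w = wadd (conv f h) (conv g h) w.
Proof. by rewrite /conv /wadd -big_split; apply: eq_bigr => k _; rewrite mulrDl. Qed.

Lemma convNl f g w : conv (wneg f) g w = wneg (conv f g) w.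
Proof.
rewrite /conv /wneg (big_morph _ (@opprD _) (@oppr0 _)).
by apply: eq_bigr => k _; rewrite mulNr.
Qed.

Lemma convNr f g w : conv f (wneg g) w = wneg (conv f g) w.
Proof.
rewrite /conv /wneg (big_morph _ (@opprD _) (@oppr0 _)).
by apply: eq_bigr => k _; rewrite mulrN.
Qed.

Lemma conv_ext f f' g g' w : (forall v, f v = f' v) -> (forall v, g v = g' v) ->
  conv f g w = conv f' g' w.
Proof. by move=> H1 H2; apply: eq_bigr => k _; rewrite H1 H2. Qed.

Lemma shift_sum L i (F : nat -> int) : (i <= L)%N ->
  \sum_(j < (L - i).+1) F (j + i)%N = \sum_(k < L.+1 | (i <= k)%N) F k.
Proof.
move=> iL; transitivity (\sum_(i <= k < L.+1) F k); last first.
  by rewrite big_geq_mkord; apply: eq_bigl.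
have -> : (i = 0 + i)%N by [].
by rewrite big_addn -subSn // big_mkord.
Qed.

Lemma convA f g h w : conv f (conv g h) w = conv (conv f g) h w.
Proof.
rewrite /conv; set L := size w.
transitivity (\sum_(i < L.+1) \sum_(k < L.+1)
   (if (i <= k)%N then f (take i w) * (g (drop i (take k w)) * h (drop k w)) else 0)).
  apply: eq_bigr => i _; rewrite size_drop big_distrr /=.
  rewrite -big_mkcond /= -(shift_sum (fun k => f (take i w) * (g (drop i (take k w)) * h (drop k w)))); last by rewrite -ltnS.
  by apply: eq_bigr => j _; rewrite take_drop drop_drop.
rewrite exchange_big /=; apply: eq_bigr => k _.
rewrite -big_mkcond /= big_distrl /= size_takel; last by rewrite -ltnS ltn_ord.
rewrite (@big_ord_widen _ 0 +%R k.+1 L.+1 (fun i => f (take i (take k w)) * g (drop i (take k w)) * h (drop k w)) (ltn_ord k)) /=.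
apply: eq_big => i //= Hi.
by rewrite take_takel // mulrA.
Qed.


Lemma smulC (a b : series m) : smul a b = smul b a.
Proof.
apply: functional_extensionality => e; rewrite /smul.
set S := (\sum_i e i)%N.
pose psi (gg : {ffun 'I_m -> 'I_S.+1}) : {ffun 'I_m -> 'I_S.+1} :=
  [ffun i => if (gg i <= e i)%N then inord (e i - gg i) else gg i].
have leS i : (e i <= S)%N by rewrite /S (bigD1 i) //= leq_addr.
have psiE (gg : {ffun 'I_m -> 'I_S.+1}) i : (gg i <= e i)%N -> val (psi gg i) = (e i - gg i)%N.
  by move=> H; rewrite ffunE H; apply: inordK; rewrite ltnS (leq_trans (leq_subr _ _)).
have psiK : involutive psi.
  move=> gg; apply/ffunP => i; case: (leqP (gg i) (e i)) => H.
    have H1 : (psi gg i <= e i)%N by rewrite psiE // leq_subr.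
    by apply/val_inj; rewrite /= psiE // psiE // subKn.
  by rewrite !ffunE !(leqNgt (gg i)) H /= (leqNgt (gg i)) H.
rewrite (reindex_inj (inv_inj psiK)) /=.
have eqP' (gg : {ffun 'I_m -> 'I_S.+1}) : [forall i, (psi gg i <= e i)%N] = [forall i, (gg i <= e i)%N].
  apply/forallP/forallP => H i.
    move: (H i); rewrite ffunE; case: ifP => [//|E2 E]; by rewrite E2 in E.
  by rewrite psiE ?leq_subr.
apply: eq_big => gg; first by rewrite eqP'.
move=> Hg; have H : forall i, (gg i <= e i)%N by apply/forallP; rewrite -eqP'.
have lt i : (e i - gg i < S.+1)%N by rewrite ltnS (leq_trans (leq_subr _ _)).
rewrite mulrC; congr (_ * _); congr (_ _); apply/ffunP => i;
  by rewrite !ffunE (H i) inordK ?subKn.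
Qed.

Lemma G_comm f g : G (conv f g) = G (conv g f).
Proof. by rewrite !G_conv smulC. Qed.


Definition tw (a : nat) : wfun :=
  fun w => bi (match w with [:: x] => (a <= x.+1)%N | _ => false end).

Lemma T_G a : (1 <= a)%N -> @T m a = G (tw a).
Proof.
move=> a1; rewrite /T (eq_big_nat _ _ (F2 := fun j => G (fun w => bi (word_of w == [:: j])))); last first.
  by move=> j /andP [aj jm]; apply: G_X; rewrite (leq_trans a1 aj) -ltnS.
rewrite -(big_morph _ G_add G_zero); apply: G_ext => w.
rewrite (big_morph (fun f : wfun => f w) (id1 := 0) (op1 := +%R) (fun f g => erefl) erefl).
case: w => [|x [|y w]] /=.
- by rewrite big1.
- rewrite /tw; under eq_bigr => j _ do rewrite eqseq_cons andbT.
  rewrite sum_bi_mem count_uniq_mem ?iota_uniq // mem_iota.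
  case: (leqP a x.+1) => H /=; last by [].
  rewrite subnKC; first by rewrite ltnS ltn_ord.
  exact: leq_trans H (leqW (ltn_ord x)).
- by rewrite /tw big1 // => j _; rewrite eqseq_cons andbF.
Qed.

Lemma conv_tw a g w :
  conv (tw a) g w = if w is x :: w' then bi (a <= x.+1)%N * g w' else 0.
Proof.
rewrite /conv; case: w => [|x w] /=; first by rewrite big_ord_recl big_ord0 /tw mul0r addr0.
rewrite big_ord_recl /= /tw mul0r add0r big_ord_recl /= take0 drop0.
case: w => [|y w] /=; first by rewrite big_ord0 addr0.
by rewrite big1 ?addr0 // => k _; rewrite /= mul0r.
Qed.

Lemma prod_tw r w : (\big[conv/wone]_(a <- r) tw a) w =
  bi (all2 (fun a (x : 'I_m) => (a <= x.+1)%N) r w).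
Proof.
elim: r w => [|a r IH] w; first by rewrite big_nil /wone; case: w.
rewrite big_cons conv_tw; case: w => [|x w] //=.
by rewrite IH biM.
Qed.

End W.

Local Close Scope ring_scope.

Lemma all2_leqP (r V : seq nat) :
  reflect (size V = size r /\ forall t, (t < size r)%N -> (nth 0 r t <= nth 0 V t)%N)
          (all2 leq r V).
Proof.
elim: r V => [|a r IH] [|x V] /=.
- by constructor; split.
- by constructor; case.
- by constructor; case.
apply: (iffP andP) => [[H1 /IH [s H2]]|[s H]].
  by split; [rewrite s | case=> //= t; rewrite ltnS; apply: H2].
split; first exact: (H 0).
by apply/IH; split; [case: s | move=> t lt; exact: (H t.+1 lt)].
Qed.

Lemma embedsP r W i :
  reflect ((i + size r <= size W)%N /\
           forall k, (k < size r)%N -> (nth 0 r k <= nth 0 W (i + k))%N)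
          (embeds_at r W i).
Proof.
apply: (iffP andP) => [[H1 /allP H2]|[H1 H2]]; split => //.
  by move=> k lt; apply: H2; rewrite mem_iota.
by apply/allP => k; rewrite mem_iota => /andP [_ lt]; apply: H2.
Qed.

Section Comb.
Variable u : seq nat.
Let n := size u.
Hypothesis hn : (0 < n)%N.
Hypothesis hinc : sorted leq u.

Lemma u_mono a b : (a <= b)%N -> (b < n)%N -> (nth 0 u a <= nth 0 u b)%N.
Proof.
move=> ab bn; apply: (sorted_leq_nth leq_trans leqnn 0 hinc) => //.
  by rewrite inE (leq_ltn_trans ab bn).
Qed.

Lemma E_take W k i :
  embeds_at u (take k W) i = (i + n <= k)%N && embeds_at u W i.
Proof.
apply/embedsP/andP => [[H1 H2]|[H1 /embedsP [H3 H4]]].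
  rewrite size_take_min leq_min in H1; case/andP: H1 => H1 H1'.
  split => //; apply/embedsP; split => // t lt.
  have := H2 t lt; rewrite nth_take //; mlia.
split; first by rewrite size_take_min leq_min H1 H3.
by move=> t lt; rewrite nth_take ?H4 //; mlia.
Qed.

Lemma inSP W :
  reflect (embeds_at u W (size W - n) /\ forall i, embeds_at u W i -> i = (size W - n)%N)
          (inS u W).
Proof.
apply: (iffP andP) => [[H1 /allP H2]|[H1 H2]]; split => //.
  move=> i Hi; apply/eqP; apply: (implyP (H2 i _)) => //.
  rewrite mem_iota add0n ltnS; case/embedsP: Hi => H _; exact: leq_trans (leq_addr _ _) H.
by apply/allP => i _; apply/implyP => /H2 ->.
Qed.

Lemma occP W : reflect (exists i, embeds_at u W i) (has (embeds_at u W) (iota 0 (size W).+1)).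
Proof.
apply: (iffP hasP) => [[i _ H]|[i H]]; first by exists i.
exists i => //; rewrite mem_iota add0n ltnS.
case/embedsP: H => H _; exact: leq_trans (leq_addr _ _) H.
Qed.


Lemma inS_take_uniq W k1 k2 : (k1 <= size W)%N -> (k2 <= size W)%N ->
  inS u (take k1 W) -> inS u (take k2 W) -> k1 = k2.
Proof.
have key a b : (a <= size W)%N -> (b <= size W)%N -> (a <= b)%N ->
    inS u (take a W) -> inS u (take b W) -> a = b.
  move=> aW bW ab /inSP [Ea _] /inSP [_ Ub].
  rewrite size_takel // in Ea Ub.
  have Eb' : embeds_at u (take b W) (a - n).
    move: Ea; rewrite !E_take => /andP [H1 ->]; rewrite andbT; mlia.
  have := Ub _ Eb'; rewrite size_takel //.
  move: Ea; rewrite E_take => /andP [H1 _] H2; mlia.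
move=> h1 h2 H1 H2; case: (leqP k1 k2) => H; first exact: key.
by symmetry; apply: key => //; apply: ltnW.
Qed.

Local Open Scope ring_scope.

Lemma sum_bi_uniq N (P : nat -> bool) :
  (forall k1 k2, (k1 < N)%N -> (k2 < N)%N -> P k1 -> P k2 -> k1 = k2) ->
  \sum_(k < N) bi (P k) = bi [exists k : 'I_N, P k].
Proof.
move=> U; case: existsP => [[k Hk]|ne].
  rewrite (bigD1 k) //= Hk big1 ?addr0 // => k' ne.
  case H: (P k') => //; case/eqP: ne; apply/val_inj; apply: U; rewrite ?ltn_ord ?H ?Hk //.
by apply: big1 => k _; case H: (P k) => //; case: ne; exists k.
Qed.

Variable m : nat.
Definition sw : wfun m := fun w => bi (inS u (word_of w)).
Definition fw : wfun m :=
  fun w => bi (~~ has (embeds_at u (word_of w)) (iota 0 (size (word_of w)).+1)).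
Definition nwv : wfun m := fun w => bi (all2 leq u (word_of w)).
Definition cwv : wfun m :=
  fun w => bi ((size w < n)%N && all2 leq (drop (n - size w) u) (word_of w)).

Lemma B_word w : conv fw nwv w = conv sw cwv w.
Proof.
rewrite /conv /fw /nwv /sw /cwv; set L := size w; set W := word_of w.
have sW : size W = L by rewrite size_map.
under eq_bigr do rewrite biM.
under [RHS]eq_bigr do rewrite biM.
rewrite (sum_bi_uniq (P := fun k => ~~ has (embeds_at u (word_of (take k w))) (iota 0 (size (word_of (take k w))).+1) && all2 leq u (word_of (drop k w)))); last first.
  move=> k1 k2 l1 l2 /andP [_ /all2_leqP [H1 _]] /andP [_ /all2_leqP [H2 _]].
  move: H1 H2; rewrite !size_map !size_drop -/L -/n; mlia.
rewrite (sum_bi_uniq (P := fun k => inS u (word_of (take k w)) && ((size (drop k w) < n)%N && all2 leq (drop (n - size (drop k w)) u) (word_of (drop k w))))); last first.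
  move=> k1 k2 l1 l2 /andP [H1 _] /andP [H2 _].
  by apply: (inS_take_uniq (W := W)); rewrite -?map_take ?sW // -ltnS.
congr bi; apply/existsP/existsP => [[k /andP [Hf Hn]]|[k /andP [Hs Hc]]].
  have kL : (k <= L)%N by rewrite -ltnS.
  move/all2_leqP: Hn; rewrite /word_of map_drop -/(word_of w) -/W size_drop sW -/n.
  move=> [Lk Hk].
  have Ek : embeds_at u W k.
    apply/embedsP; split; first by rewrite sW; mlia.
    by move=> t lt; rewrite -nth_drop; apply: Hk.
  move: Hf; rewrite /word_of map_take -/(word_of w) -/W => /occP Hf.
  have nEk i : embeds_at u W i -> (k < i + n)%N.
    move=> Ei; rewrite ltnNge; apply/negP => H; apply: Hf; exists i.
    by rewrite E_take H.
  case: (ex_minnP (ex_intro (fun i => embeds_at u W i) k Ek)) => p Ep pmin.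
  have pk := pmin _ Ek.
  have lt2 : (p + n < L.+1)%N by rewrite ltnS; mlia.
  exists (Ordinal lt2) => /=; apply/andP; split.
    rewrite /word_of map_take -/(word_of w) -/W; apply/inSP.
    rewrite size_takel ?sW; last by mlia.
    rewrite addnK E_take leqnn Ep; split => // i; rewrite E_take => /andP [H1 H2].
    have := pmin _ H2.
    by move=> H3; mlia.
  have pn := nEk _ Ep.
  rewrite size_drop -/L; apply/andP; split; first by mlia.
  apply/all2_leqP; rewrite /word_of map_drop -/(word_of w) -/W size_drop sW size_drop -/n.
  split; first by mlia.
  move=> t lt; rewrite !nth_drop.
  have lt' : (p + n + t - k < n)%N by mlia.
  have := Hk _ lt'; rewrite nth_drop.
  have -> : (k + (p + n + t - k) = p + n + t)%N by mlia.
  by have -> : (n - (L - (p + n)) + t = p + n + t - k)%N by mlia.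
have kL : (k <= L)%N by rewrite -ltnS.
move: Hs; rewrite /word_of map_take -/(word_of w) -/W => /inSP [Ek Uk].
rewrite size_takel ?sW // in Ek Uk.
move: (Ek); rewrite E_take => /andP [kn /embedsP [_ Ep]].
move/andP: Hc; rewrite size_drop -/L => [[Lk /all2_leqP]].
rewrite /word_of map_drop -/(word_of w) -/W size_drop sW size_drop -/n => [[_ Hc]].
have lt1 : (L - n < L.+1)%N by rewrite ltnS leq_subr.
exists (Ordinal lt1) => /=; apply/andP; split.
  rewrite /word_of map_take -/(word_of w) -/W; apply/negP => /occP [i].
  rewrite E_take => /andP [H1 H2].
  have Eki : embeds_at u (take k W) i by rewrite E_take H2 andbT; mlia.
  have := Uk _ Eki; mlia.
apply/all2_leqP; rewrite /word_of map_drop -/(word_of w) -/W size_drop sW -/n.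
split; first by mlia.
move=> t lt; rewrite nth_drop.
case: (ltnP (L - n + t) k) => H.
  have ls : (L - n + t - (k - n) < n)%N by mlia.
  have := Ep _ ls; have -> : (k - n + (L - n + t - (k - n)) = L - n + t)%N by mlia.
  apply: leq_trans; apply: u_mono => //; mlia.
have ls : (L - n + t - k < n - (n - (L - k)))%N by mlia.
have := Hc _ ls; rewrite !nth_drop.
have -> : (k + (L - n + t - k) = L - n + t)%N by mlia.
by have -> : (n - (L - k) + (L - n + t - k) = t)%N by mlia.
Qed.


Lemma tw1E (v : seq 'I_m) : tw 1 v = bi (size v == 1)%N.
Proof. by case: v => [|x [|y v]]. Qed.

Lemma conv_tw1 f (w : seq 'I_m) :
  conv f (tw 1) w = bi (0 < size w)%N * f (take (size w).-1 w).
Proof.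
rewrite /conv; case: w => [|x w]; first by rewrite big_ord_recl big_ord0 tw1E /= !mul0r mulr0 addr0.
rewrite (sum_single (k0 := size w) (Z := fun k => f (take k (x :: w)) * tw 1 (drop k (x :: w)))) //=; last first.
  move=> k lt ne; rewrite tw1E size_drop /=.
  case: eqP => E; last by rewrite mulr0.
  by case/eqP: ne; move: lt E; clear; move=> *; mlia.
by rewrite tw1E size_drop /= subSnn /= mulr1 mul1r.
Qed.

Definition pw : wfun m := wadd (@wone m) (wneg (tw 1)).

Lemma A_word w : conv fw pw w = wadd (@wone m) (wneg sw) w.
Proof.
rewrite /pw convDr {1}/wadd conv_oner convNr {1}/wneg conv_tw1 /wadd /wneg /wone /fw /sw.
case: w => [|x w].
  have e0 i : embeds_at u [::] i = false.
    by apply/negP => /embedsP [H _]; move: H hn; rewrite /=; clear; move=> *; mlia.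
  by rewrite /= e0 /inS e0 /= mul0r !subr0.
have ne : (x :: w == [::]) = false by [].
rewrite ne; set w0 := x :: w; set L := size w0; set W := word_of w0.
have Lp : (0 < L)%N by [].
have sW : size W = L by rewrite size_map.
rewrite Lp mul1r sub0r /word_of map_take -/(word_of w0) -/W.
case: (occP (take L.-1 W)) => [[i Ei]|nE'].
  move: (Ei); rewrite E_take => /andP [H1 H2].
  have -> : has (embeds_at u W) (iota 0 (size W).+1) by apply/occP; exists i.
  case: (inSP W) => [[_ U]|_]; last by rewrite /= subrr oppr0.
  have E := U _ H2; exfalso; move: H1 Lp; rewrite E sW -subn1; clear; move=> *; mlia.
case: (occP W) => [[i Ei]|nE]; last first.
  case: (inSP W) => [[E _]|_]; last by rewrite /= subrr oppr0.
  by case: nE; exists (size W - n)%N.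
case: (inSP W) => [_|nS]; first by rewrite /= sub0r.
case: nS; split.
  suff -> : (size W - n = i)%N by [].
  move: (Ei) => /embedsP [H1 _]; case: (ltnP (i + n) L) => H.
    by case: nE'; exists i; rewrite E_take Ei andbT; mlia.
  rewrite sW; mlia.
move=> j Ej; move: (Ej) => /embedsP [H1 _]; case: (ltnP (j + n) L) => H.
  by case: nE'; exists j; rewrite E_take Ej andbT; mlia.
rewrite sW in H1 *; mlia.
Qed.

End Comb.

Local Open Scope ring_scope.

Lemma all2_word m r (w : seq 'I_m) :
  all2 (fun a (x : 'I_m) => (a <= x.+1)%N) r w = all2 leq r (word_of w).
Proof. by elim: r w => [|a r IH] [|x w] //=; rewrite IH. Qed.

Lemma big_nth_ord (R : Type) (idx : R) (op : R -> R -> R) (F : nat -> R) (r : seq nat) :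
  \big[op/idx]_(i < size r) F (nth 0%N r i) = \big[op/idx]_(a <- r) F a.
Proof. by rewrite (big_nth 0%N) big_mkord. Qed.

Lemma big_shift_drop (R : Type) (idx : R) (op : R -> R -> R) (F : nat -> R) (r : seq nat) i :
  (i <= size r)%N ->
  \big[op/idx]_(i.+1 <= j < (size r).+1) F (nth 0%N r j.-1) = \big[op/idx]_(a <- drop i r) F a.
Proof.
move=> ir; rewrite big_add1 /= [RHS](big_nth 0%N) size_drop.
have -> : i = (0 + i)%N by [].
rewrite big_addn; apply: eq_bigr => j _; rewrite nth_drop addnC //.
Qed.

Section Final.
Variable m : nat.
Variable u : seq nat.
Hypothesis hn : (0 < size u)%N.
Hypothesis hu : all (fun a => (1 <= a <= m)%N) u.
Hypothesis hinc : sorted leq u.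
Let n := size u.

Lemma u1 i : (i < n)%N -> (1 <= nth 0%N u i)%N.
Proof. by move=> lt; move/allP: hu => /(_ _ (mem_nth 0%N lt)) /andP []. Qed.

Lemma N_G : \big[@smul m/@sone m]_(i < n) @T m (nth 0%N u i) = G (nwv u (m:=m)).
Proof.
rewrite (eq_bigr (fun i : 'I_n => G (tw (nth 0%N u i)))); last by move=> i _; apply: T_G; apply: u1.
rewrite -(big_morph _ (@G_conv m) (@G_one m)); apply: G_ext => w.
by rewrite big_nth_ord prod_tw /nwv all2_word.
Qed.

Lemma P_G : ssub (@sone m) (\big[@sadd m/@szero m]_(1 <= i < m.+1) @X m i) = G (pw (m:=m)).
Proof.
have -> : \big[@sadd m/@szero m]_(1 <= i < m.+1) @X m i = @T m 1 by [].
by rewrite T_G // /ssub -G_neg -G_one -G_add.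
Qed.

Lemma C_G : sadd (@sone m) (\big[@sadd m/@szero m]_(1 <= i < n)
               \big[@smul m/@sone m]_(i.+1 <= j < n.+1) @T m (nth 0%N u j.-1))
            = G (cwv u (m:=m)).
Proof.
rewrite (eq_big_nat _ _ (F2 := fun i => G (\big[@conv m/@wone m]_(a <- drop i u) tw a))); last first.
  move=> i /andP [i1 iN].
  rewrite (eq_big_nat _ _ (F2 := fun j => G (tw (nth 0%N u j.-1)))); last first.
    move=> j /andP [j1 jn]; apply: T_G; apply: u1; rewrite -subn1; mlia.
  rewrite -(big_morph _ (@G_conv m) (@G_one m)) big_shift_drop //; exact: ltnW.
rewrite -(big_morph _ (@G_add m) (@G_zero m)) -G_one -G_add; apply: G_ext => w.
rewrite /wadd (big_morph (fun f : wfun m => f w) (id1 := 0) (op1 := +%R) (fun f g => erefl) erefl).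
under eq_bigr => i _ do rewrite prod_tw all2_word.
rewrite /cwv /wone; case: w => [|x w].
  rewrite /= big_nat_cond big1 ?addr0; last first.
    move=> i /andP [/andP [i1 iN] _]; case: (all2_leqP (drop i u) [::]) => // [[H _]].
    by move: H; rewrite size_drop -/n /=; mlia.
  by rewrite subn0 drop_size hn.
set w0 := x :: w; set W := word_of w0.
have sW : size W = size w0 by rewrite size_map.
have ne : (w0 == [::]) = false by [].
rewrite ne add0r big_geq_mkord.
rewrite big_mkcond /=.
rewrite (eq_bigr (fun i : 'I_(size u) => bi ((0 < i)%N && all2 leq (drop i u) W))); last first.
  by move=> i _; case: (0 < i)%N.
rewrite (sum_bi_uniq (P := fun i => (0 < i)%N && all2 leq (drop i u) W)); last first.
  move=> k1 k2 l1 l2 /andP [_ /all2_leqP [H1 _]] /andP [_ /all2_leqP [H2 _]].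
  by move: H1 H2; rewrite !size_drop; mlia.
congr bi; apply/existsP/andP => [[i /andP [i0 /all2_leqP [Hs Ht]]]|[Lu /all2_leqP [Hs Ht]]].
  rewrite size_drop sW /= in Hs; split; first by rewrite Hs; mlia.
  apply/all2_leqP; rewrite sW /= Hs; have -> : (size u - (size u - i) = i)%N by mlia.
  by split; [rewrite size_drop | exact: Ht].
have lt : (size u - size w0 < size u)%N by rewrite /w0 /=; mlia.
exists (Ordinal lt) => /=; apply/andP; split; first by mlia.
by apply/all2_leqP.
Qed.

Lemma S_G : @Sser m u = G (sw u (m:=m)).
Proof.
apply: functional_extensionality => c.
rewrite /Sser G_bi; congr Posz; exact: (@card_tuples m _ (fun w => (cont w == c) && inS u (word_of w))).
Qed.

Theorem main :
  let n := size u in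
  let N := \big[@smul m/@sone m]_(i < n) @T m (nth 0%N u i) in
  let D := sadd
             (smul (sadd (@sone m)
                      (\big[@sadd m/@szero m]_(1 <= i < n)
                          \big[@smul m/@sone m]_(i.+1 <= j < n.+1) @T m (nth 0%N u j.-1)))
                   (ssub (@sone m) (\big[@sadd m/@szero m]_(1 <= i < m.+1) @X m i)))
             N in
  smul (@Sser m u) D = N.
Proof.
move=> n0 N D; rewrite /D /N /n0 C_G P_G N_G S_G -!G_conv -G_add -G_conv.
set s := sw u (m:=m); set c := cwv u (m:=m); set p := pw (m:=m); set nv := nwv u (m:=m).
set f := fw u (m:=m).
have e1 : G (conv s (wadd (conv c p) nv)) =
          sadd (G (conv s (conv c p))) (G (conv s nv)).
  by rewrite -G_add; apply: G_ext => w; rewrite convDr.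
have e2 : G (conv s (conv c p)) = G (conv f (conv nv p)).
  apply: G_ext => w; rewrite convA convA.
  by apply: conv_ext => // v; rewrite B_word.
have e3 : G (conv f (conv nv p)) = G (conv f (conv p nv)).
  by rewrite !G_conv (smulC (G nv)).
have e4 : G (conv f (conv p nv)) = G (wadd nv (wneg (conv s nv))).
  apply: G_ext => w; rewrite convA (conv_ext (g' := nv) (f' := wadd (@wone m) (wneg s))) //.
    by rewrite convDl /wadd conv_onel convNl.
  by move=> v; rewrite A_word.
rewrite e1 e2 e3 e4 G_add G_neg; apply: functional_extensionality => e.
by rewrite /sadd /sneg addrNK.
Qed.

End Final.

Theorem theorem9 (m : nat) (u : seq nat)
  (hm : (1 <= m)%N)
  (hn : (0 < size u)%N)
  (hu : all (fun a => (1 <= a <= m)%N) u)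
  (hinc : sorted leq u) :
  let n := size u in
  let N := \big[@smul m/@sone m]_(i < n) @T m (nth 0%N u i) in
  let D := sadd
             (smul (sadd (@sone m)
                      (\big[@sadd m/@szero m]_(1 <= i < n)
                          \big[@smul m/@sone m]_(i.+1 <= j < n.+1) @T m (nth 0%N u j.-1)))
                   (ssub (@sone m) (\big[@sadd m/@szero m]_(1 <= i < m.+1) @X m i)))
             N in
  smul (@Sser m u) D = N.
Proof. exact: (main hn hu hinc). Qed.
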